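(* Let $(X,(\cdot,\cdot|\cdot))$ be a 2-inner product space over $\mathbb{K}\in\{\mathbb{R},\mathbb{C}\}$, let $n$ be a positive integer, let $x,y_1,\dots,y_n,z\in X$ and $c_1,\dots,c_n\in\mathbb{K}$. Then $\big|\sum_{i=1}^n c_i(x,y_i|z)\big|^2$ is bounded above by each of the following four quantities: (a) $\|x|z\|^2\sum_{i=1}^n|c_i|^2\Big\{\max_{1\le i\le n}\|y_i|z\|^2+\big(\sum_{1\le i\ne j\le n}|(y_i,y_j|z)|^2\big)^{1/2}\Big\}$; (b) $\|x|z\|^2\max_{1\le i\le n}|c_i|^2\Big\{\sum_{i=1}^n\|y_i|z\|^2+\sum_{1\le i\ne j\le n}|(y_i,y_j|z)|\Big\}$; (c) for any $p>1$, $\frac1p+\frac1q=1$: $\|x|z\|^2\big(\sum_{i=1}^n|c_i|^{2p}\big)^{1/p}\Big\{\big(\sum_{i=1}^n\|y_i|z\|^{2q}\big)^{1/q}+(n-1)^{1/p}\big(\sum_{1\le i\ne j\le n}|(y_i,y_j|z)|^{q}\big)^{1/q}\Big\}$; (d) $\|x|z\|^2\sum_{i=1}^n|c_i|^2\Big\{\max_{1\le i\le n}\|y_i|z\|^2+(n-1)\max_{1\le i\ne j\le n}|(y_i,y_j|z)|\Big\}$.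
   Context: A 2-inner product on a linear space $X$ of dimension greater than $1$ over $\mathbb{K}$ ($\mathbb{K}=\mathbb{R}$ or $\mathbb{C}$) is a function $(\cdot,\cdot|\cdot):X\times X\times X\to\mathbb{K}$ such that for all $x,x',y,z\in X$ and $\alpha\in\mathbb{K}$: (i) $(x,x|z)\ge 0$, and $(x,x|z)=0$ iff $x$ and $z$ are linearly dependent; (ii) $(x,x|z)=(z,z|x)$; (iii) $(y,x|z)=\overline{(x,y|z)}$; (iv) $(\alpha x,y|z)=\alpha(x,y|z)$; (v) $(x+x',y|z)=(x,y|z)+(x',y|z)$. The associated 2-norm is $\|x|z\|=\sqrt{(x,x|z)}$. Sums and maxima indexed by $1\le i\ne j\le n$ run over all ordered pairs $(i,j)$ with $i\ne j$. *)

(* Defs.v *)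
From HB Require Import structures.
From mathcomp Require Import all_boot all_order all_algebra.
From mathcomp Require Import all_classical all_reals exp.
From mathcomp Require Import complex.

Set Implicit Arguments.
Unset Strict Implicit.
Unset Printing Implicit Defensive.

Import Order.TTheory GRing.Theory Num.Theory.
Local Open Scope ring_scope.

Definition lin_dep (K : nzRingType) (X : lmodType K) (x z : X) : Prop :=
  exists a b : K, (a != 0 \/ b != 0) /\ a *: x + b *: z = 0.

(* A 2-inner product on X (a linear space of dimension > 1 over K),
   [conj] being the conjugation of K (identity for K = R). *)
Record is_2inner (K : numDomainType) (conj : K -> K) (X : lmodType K)
    (ip : X -> X -> X -> K) : Prop := {
  ip_dim : exists x z : X, ~ lin_dep x z;
  ip_ge0 : forall x z : X, 0 <= ip x x z;
  ip_eq0 : forall x z : X, ip x x z = 0 <-> lin_dep x z;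
  ip_sym : forall x z : X, ip x x z = ip z z x;
  ip_conj : forall x y z : X, ip y x z = conj (ip x y z);
  ip_scal : forall (a : K) (x y z : X), ip (a *: x) y z = a * ip x y z;
  ip_add : forall x x' y z : X, ip (x + x') y z = ip x y z + ip x' y z }.

(* the four bounds of Corollary 3.2; [absK] is the (real-valued) modulus on K *)
Definition cor32_bounds (R : realType) (K : numDomainType) (absK : K -> R)
    (X : lmodType K) (ip : X -> X -> X -> K) (n : nat)
    (x : X) (y : 'I_n -> X) (z : X) (c : 'I_n -> K) : Prop :=
  let nrm (u v : X) : R := Num.sqrt (absK (ip u u v)) in
  let lhs := absK (\sum_(i < n) c i * ip x (y i) z) ^+ 2 in
  let nx2 := nrm x z ^+ 2 in
  [/\
      lhs <= nx2 * (\sum_(i < n) absK (c i) ^+ 2) *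
             (\big[Num.max/0]_(i < n) nrm (y i) z ^+ 2 +
              Num.sqrt (\sum_(i < n) \sum_(j < n | i != j)
                          absK (ip (y i) (y j) z) ^+ 2)),
      lhs <= nx2 * (\big[Num.max/0]_(i < n) absK (c i) ^+ 2) *
             (\sum_(i < n) nrm (y i) z ^+ 2 +
              \sum_(i < n) \sum_(j < n | i != j) absK (ip (y i) (y j) z)),
      (forall p q : R, 1 < p -> p^-1 + q^-1 = 1 ->
        lhs <= nx2 * (\sum_(i < n) absK (c i) `^ (2 * p)) `^ p^-1 *
               ((\sum_(i < n) nrm (y i) z `^ (2 * q)) `^ q^-1 +
                (n - 1)%:R `^ p^-1 *
                (\sum_(i < n) \sum_(j < n | i != j)
                   absK (ip (y i) (y j) z) `^ q) `^ q^-1))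
    &
      lhs <= nx2 * (\sum_(i < n) absK (c i) ^+ 2) *
             (\big[Num.max/0]_(i < n) nrm (y i) z ^+ 2 +
              (n - 1)%:R * \big[Num.max/0]_(i < n)
                             \big[Num.max/0]_(j < n | i != j)
                                absK (ip (y i) (y j) z))].

(* Main.v *)
Require Import Defs.
From HB Require Import structures.
From mathcomp Require Import all_boot all_order all_algebra.
From mathcomp Require Import all_classical all_reals exp.
From mathcomp Require Import complex.
From mathcomp Require Import hoelder.
From mathcomp Require Import ring lra.

Import Order.TTheory GRing.Theory Num.Theory.
Set Implicit Arguments.
Unset Strict Implicit.
Unset Printing Implicit Defensive.
Local Open Scope ring_scope.

Section Hoelder.
Variable R : realType.

Lemma powRK (s p : R) : 0 <= s -> 0 < p -> (s `^ p^-1) `^ p = s.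
Proof. by move=> s0 p0; rewrite -powRrM mulVf ?gt_eqF // powRr1. Qed.

Lemma hoelder_seq (I : Type) (r : seq I) (P : pred I) (u v : I -> R) (p q : R) :
  (forall k, 0 <= u k) -> (forall k, 0 <= v k) -> 0 < p -> 0 < q ->
  p^-1 + q^-1 = 1 ->
  \sum_(k <- r | P k) u k * v k <=
  (\sum_(k <- r | P k) u k `^ p) `^ p^-1 * (\sum_(k <- r | P k) v k `^ q) `^ q^-1.
Proof.
move=> u0 v0 p0 q0 pq; elim: r => [|k r IH].
  by rewrite !big_nil mulr_ge0 ?powR_ge0.
rewrite !big_cons; case: (P k) => //.
apply: le_trans (lerD (lexx _) IH) _.
have Su : 0 <= \sum_(k <- r | P k) u k `^ p by apply: sumr_ge0 => i _; exact: powR_ge0.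
have Sv : 0 <= \sum_(k <- r | P k) v k `^ q by apply: sumr_ge0 => i _; exact: powR_ge0.
have := hoelder2 (u0 k) (powR_ge0 (\sum_(k <- r | P k) u k `^ p) p^-1)
  (v0 k) (powR_ge0 (\sum_(k <- r | P k) v k `^ q) q^-1) p0 q0 pq.
by rewrite !powRK.
Qed.

Lemma hoelder_fin (I : finType) (P : pred I) (u v : I -> R) (p q : R) :
  (forall k, 0 <= u k) -> (forall k, 0 <= v k) -> 0 < p -> 0 < q ->
  p^-1 + q^-1 = 1 ->
  \sum_(k | P k) u k * v k <=
  (\sum_(k | P k) u k `^ p) `^ p^-1 * (\sum_(k | P k) v k `^ q) `^ q^-1.
Proof. exact: hoelder_seq. Qed.

Lemma CS_fin (I : finType) (P : pred I) (u v : I -> R) :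
  (forall k, 0 <= u k) -> (forall k, 0 <= v k) ->
  \sum_(k | P k) u k * v k <=
  Num.sqrt (\sum_(k | P k) u k ^+ 2) * Num.sqrt (\sum_(k | P k) v k ^+ 2).
Proof.
move=> u0 v0.
have h2 : (2 : R)^-1 + 2^-1 = 1 by field.
have := hoelder_fin P u0 v0 (ltr0Sn _ 1) (ltr0Sn _ 1) h2.
rewrite -!powR12_sqrt; last 2 first.
- by apply: sumr_ge0 => i _; exact: sqr_ge0.
- by apply: sumr_ge0 => i _; exact: sqr_ge0.
congr (_ <= _ * _); congr (_ `^ _); apply: eq_bigr => i _; by rewrite powR_mulrn.
Qed.

End Hoelder.

Section Bounds.
Variables (R : realType) (n : nat) (C m : 'I_n -> R) (a : 'I_n -> 'I_n -> R).
Hypotheses (n0 : (0 < n)%N) (C0 : forall i, 0 <= C i) (m0 : forall i, 0 <= m i)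
  (a0 : forall i j, 0 <= a i j).

Lemma offdiag (g : 'I_n -> 'I_n -> R) :
  \sum_(i < n) \sum_(j < n | i != j) g i j =
  \sum_(i < n) \sum_(j < n) g i j - \sum_(i < n) g i i.
Proof.
rewrite -sumrB; apply: eq_bigr => i _.
rewrite [in RHS](bigD1 i) //= addrC addrK; apply: eq_bigl => j; by rewrite eq_sym.
Qed.

Lemma offL (f : 'I_n -> R) :
  \sum_(i < n) \sum_(j < n | i != j) f i = (n - 1)%:R * \sum_(i < n) f i.
Proof.
rewrite offdiag.
under eq_bigr => i _ do rewrite sumr_const card_ord -mulr_natr.
by rewrite -mulr_suml natrB // mulrBl mul1r mulrC.
Qed.

Lemma offR (f : 'I_n -> R) :
  \sum_(i < n) \sum_(j < n | i != j) f j = (n - 1)%:R * \sum_(i < n) f i.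
Proof.
rewrite offdiag sumr_const card_ord natrB // mulrBl mul1r mulr_natl.
by [].
Qed.

Lemma amgm_off (w : 'I_n -> R) :
  \sum_(i < n) \sum_(j < n | i != j) w i * w j <=
  (n - 1)%:R * \sum_(i < n) w i ^+ 2.
Proof.
have -> : (n - 1)%:R * \sum_(i < n) w i ^+ 2 =
  (\sum_(i < n) \sum_(j < n | i != j) (w i ^+ 2 + w j ^+ 2)) / 2.
  rewrite [X in _ = X / 2](eq_bigr (fun i => \sum_(j < n | i != j) w i ^+ 2 +
     \sum_(j < n | i != j) w j ^+ 2)); last by move=> i _; rewrite big_split.
  rewrite big_split /= offL (offR (fun j => w j ^+ 2)); by field.
rewrite mulr_suml; apply: ler_sum => i _.
rewrite mulr_suml; apply: ler_sum => j _.
have := sqr_ge0 (w i - w j); nra.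
Qed.

Let Sv := \sum_(i < n) C i ^+ 2 * m i ^+ 2 +
          \sum_(i < n) \sum_(j < n | i != j) C i * C j * a i j.

Lemma diag_max :
  \sum_(i < n) C i ^+ 2 * m i ^+ 2 <=
  (\sum_(i < n) C i ^+ 2) * \big[Num.max/0]_(i < n) m i ^+ 2.
Proof.
rewrite mulr_suml; apply: ler_sum => i _; apply: ler_wpM2l; first exact: sqr_ge0.
exact: (le_bigmax 0 (fun i => m i ^+ 2) i).
Qed.

Lemma bound_a :
  Sv <= (\sum_(i < n) C i ^+ 2) *
        (\big[Num.max/0]_(i < n) m i ^+ 2 +
         Num.sqrt (\sum_(i < n) \sum_(j < n | i != j) a i j ^+ 2)).
Proof.
rewrite mulrDr; apply: lerD; first exact: diag_max.
rewrite (pair_big_dep xpredT (fun i j => i != j) (fun i j => C i * C j * a i j)).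
rewrite (pair_big_dep xpredT (fun i j => i != j) (fun i j => a i j ^+ 2)) /=.
apply: le_trans (@CS_fin _ _ _ (fun k => C k.1 * C k.2) (fun k => a k.1 k.2) _ _) _.
- by move=> k; apply: mulr_ge0.
- by move=> k; apply: a0.
apply: ler_wpM2r; first exact: sqrtr_ge0.
have SC : 0 <= \sum_(i < n) C i ^+ 2 by apply: sumr_ge0 => i _; exact: sqr_ge0.
rewrite -(ger0_norm SC) -sqrtr_sqr ler_sqrt; last exact: sqr_ge0.
rewrite -(pair_big_dep xpredT (fun i j => i != j) (fun i j => (C i * C j) ^+ 2)).
rewrite expr2 mulr_suml; apply: ler_sum => i _.
rewrite mulr_sumr.
apply: le_trans (_ : _ <= \sum_(j < n) (C i * C j) ^+ 2) _.
  rewrite [X in _ <= X](bigID (fun j => i != j)) /= lerDl.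
  by apply: sumr_ge0 => j _; exact: sqr_ge0.
by apply: ler_sum => j _; rewrite exprMn.
Qed.


Lemma bound_b :
  Sv <= \big[Num.max/0]_(i < n) C i ^+ 2 *
        (\sum_(i < n) m i ^+ 2 +
         \sum_(i < n) \sum_(j < n | i != j) a i j).
Proof.
set M := \big[Num.max/0]_(i < n) C i ^+ 2.
have hM : forall i, C i ^+ 2 <= M by move=> i; exact: (le_bigmax 0 (fun i => C i ^+ 2) i).
rewrite mulrDr; apply: lerD.
  rewrite mulr_sumr; apply: ler_sum => i _; apply: ler_wpM2r; first exact: sqr_ge0.
  exact: hM.
rewrite mulr_sumr; apply: ler_sum => i _.
rewrite mulr_sumr; apply: ler_sum => j _.
apply: ler_wpM2r; first exact: a0.
have := hM i; have := hM j; have := sqr_ge0 (C i - C j); nra.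
Qed.

Lemma bound_d :
  Sv <= (\sum_(i < n) C i ^+ 2) *
        (\big[Num.max/0]_(i < n) m i ^+ 2 +
         (n - 1)%:R * \big[Num.max/0]_(i < n) \big[Num.max/0]_(j < n | i != j) a i j).
Proof.
rewrite mulrDr; apply: lerD; first exact: diag_max.
set M := \big[Num.max/0]_(i < n) _.
have hM : forall i j, i != j -> a i j <= M.
  move=> i j ij; apply: le_trans (le_bigmax 0 _ i).
  exact: (le_bigmax_cond 0 (fun j => a i j) ij).
have M0 : 0 <= M by apply: bigmax_ge_id.
apply: le_trans (_ : _ <= \sum_(i < n) \sum_(j < n | i != j) C i * C j * M) _.
  apply: ler_sum => i _; apply: ler_sum => j ij; apply: ler_wpM2l.
    by apply: mulr_ge0.
  exact: hM.
under eq_bigr do rewrite -mulr_suml.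
rewrite -mulr_suml [X in _ <= X]mulrA [X in _ <= X]mulrC [X in X <= _]mulrC; apply: ler_wpM2l => //.
by rewrite [X in _ <= X]mulrC; exact: amgm_off.
Qed.


Lemma bound_c (p q : R) : 1 < p -> p^-1 + q^-1 = 1 ->
  Sv <= (\sum_(i < n) C i `^ (2 * p)) `^ p^-1 *
        ((\sum_(i < n) m i `^ (2 * q)) `^ q^-1 +
         (n - 1)%:R `^ p^-1 *
         (\sum_(i < n) \sum_(j < n | i != j) a i j `^ q) `^ q^-1).
Proof.
move=> p1 pq.
have p0 : 0 < p by apply: lt_trans p1.
have q0 : 0 < q.
  have : 0 < q^-1.
    have -> : q^-1 = 1 - p^-1 by rewrite -pq addrAC subrr add0r.
    by rewrite subr_gt0 invf_lt1.
  by rewrite invr_gt0.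
have E1 : \sum_(i < n) C i `^ (2 * p) = \sum_(i < n) (C i ^+ 2) `^ p.
  by apply: eq_bigr => i _; rewrite powRrM powR_mulrn.
have E2 : \sum_(i < n) m i `^ (2 * q) = \sum_(i < n) (m i ^+ 2) `^ q.
  by apply: eq_bigr => i _; rewrite powRrM powR_mulrn.
rewrite mulrDr; apply: lerD.
  rewrite E1 E2.
  exact: (@hoelder_fin _ _ xpredT (fun i => C i ^+ 2) (fun i => m i ^+ 2) p q
            (fun i => sqr_ge0 _) (fun i => sqr_ge0 _) p0 q0 pq).
rewrite (pair_big_dep xpredT (fun i j => i != j) (fun i j => C i * C j * a i j)).
rewrite (pair_big_dep xpredT (fun i j => i != j) (fun i j => a i j `^ q)) /=.
apply: le_trans (@hoelder_fin _ _ (fun k => k.1 != k.2) (fun k => C k.1 * C k.2)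
   (fun k => a k.1 k.2) p q (fun k => mulr_ge0 (C0 _) (C0 _)) (fun k => a0 _ _)
   p0 q0 pq) _.
rewrite mulrCA mulrA; apply: ler_wpM2r; first exact: powR_ge0.
have SC : 0 <= \sum_(i < n) C i `^ (2 * p).
  by apply: sumr_ge0 => i _; exact: powR_ge0.
rewrite -powRM //; apply: ge0_ler_powR.
- by rewrite invr_ge0 ltW.
- by rewrite nnegrE; apply: sumr_ge0 => i _; exact: powR_ge0.
- by rewrite nnegrE mulr_ge0.
rewrite -(pair_big_dep xpredT (fun i j => i != j) (fun i j => (C i * C j) `^ p)) /=.
have E3 : \sum_(i < n) C i `^ (2 * p) = \sum_(i < n) (C i `^ p) ^+ 2.
  by apply: eq_bigr => i _; rewrite mulrC powRrM powR_mulrn // powR_ge0.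
rewrite E3; apply: le_trans (amgm_off (fun i => C i `^ p)).
apply: ler_sum => i _; apply: ler_sum => j _.
by rewrite powRM.
Qed.

End Bounds.

Section TwoInner.
Variables (K : numDomainType) (conj : K -> K).
Hypotheses (conjD : forall a b, conj (a + b) = conj a + conj b)
  (conjM : forall a b, conj (a * b) = conj a * conj b)
  (conjK : forall a, conj (conj a) = a) (conj1 : conj 1 = 1)
  (normJ : forall a, `|conj a| = `|a|) (mulJ : forall a, a * conj a = `|a| ^+ 2).
Variables (X : lmodType K) (ip : X -> X -> X -> K).
Hypothesis H : is_2inner conj ip.

Lemma conj0 : conj 0 = 0.
Proof.
have h := conjD 0 0; rewrite addr0 in h.
by apply: (addrI (conj 0)); rewrite -h addr0.
Qed.

Lemma conjN a : conj (- a) = - conj a.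
Proof. by apply: (addrI (conj a)); rewrite -conjD !subrr conj0. Qed.

Lemma ip0l y z : ip 0 y z = 0.
Proof. by have := ip_scal H 0 0 y z; rewrite scale0r mul0r. Qed.

Lemma ipsuml (I : Type) (r : seq I) (P : pred I) (F : I -> X) y z :
  ip (\sum_(i <- r | P i) F i) y z = \sum_(i <- r | P i) ip (F i) y z.
Proof.
exact: (big_morph (fun v => ip v y z) (fun u w => ip_add H u w y z) (ip0l y z)).
Qed.

Lemma conj_sum (I : Type) (r : seq I) (P : pred I) (F : I -> K) :
  conj (\sum_(i <- r | P i) F i) = \sum_(i <- r | P i) conj (F i).
Proof. exact: (big_morph conj conjD conj0). Qed.

Lemma ipsumr (I : Type) (r : seq I) (P : pred I) (F : I -> X) x z :
  ip x (\sum_(i <- r | P i) F i) z = \sum_(i <- r | P i) ip x (F i) z.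
Proof.
rewrite (ip_conj H) ipsuml conj_sum; apply: eq_bigr => i _.
by rewrite -(ip_conj H).
Qed.

Lemma ipZr a x y z : ip x (a *: y) z = conj a * ip x y z.
Proof. by rewrite (ip_conj H) (ip_scal H) conjM -(ip_conj H). Qed.

Lemma ipDr x y y' z : ip x (y + y') z = ip x y z + ip x y' z.
Proof. by rewrite (ip_conj H) (ip_add H) conjD -!(ip_conj H). Qed.

Lemma ip_self_conj x z : conj (ip x x z) = ip x x z.
Proof. by rewrite -(ip_conj H). Qed.

Lemma ip_expand s t u v z :
  ip (s *: u + t *: v) (s *: u + t *: v) z =
  s * conj s * ip u u z + s * conj t * ip u v z +
  t * conj s * ip v u z + t * conj t * ip v v z.
Proof. by rewrite (ip_add H) !(ip_scal H) !ipDr !ipZr; ring. Qed.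

Lemma ge0_eq (r s : K) : 0 <= r -> r = s -> 0 <= s.
Proof. by move=> h <-. Qed.

Lemma CS x y z : `|ip x y z| ^+ 2 <= ip x x z * ip y y z.
Proof.
have hA := ip_ge0 H x z; have hB := ip_ge0 H y z.
have cA := ip_self_conj x z; have cB := ip_self_conj y z.
have ba : ip y x z = conj (ip x y z) by rewrite (ip_conj H).
rewrite -mulJ.
set a := ip x y z.
move: hB; rewrite le_eqVlt => /orP [/eqP B0 | Bpos].
  move: hA; rewrite le_eqVlt => /orP [/eqP A0 | Apos].
    have E : ip (1 *: x + (- a) *: y) (1 *: x + (- a) *: y) z =
             - (a * conj a + a * conj a).
      by rewrite ip_expand conjN conj1 -A0 -B0 ba -/a; ring.
    have := ge0_eq (ip_ge0 H _ z) E.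
    rewrite -A0 -B0 mulr0 oppr_ge0 => h; apply: le_trans _ h.
    by rewrite lerDl mulJ exprn_ge0.
  have E : ip (ip x x z *: y + (- conj a) *: x) (ip x x z *: y + (- conj a) *: x) z
      = ip x x z * (ip x x z * ip y y z - a * conj a).
    by rewrite ip_expand conjN conjK cA ba -/a; ring.
  by have := ge0_eq (ip_ge0 H _ z) E; rewrite pmulr_rge0 // subr_ge0.
have E : ip (ip y y z *: x + (- a) *: y) (ip y y z *: x + (- a) *: y) z
   = ip y y z * (ip x x z * ip y y z - a * conj a).
  by rewrite ip_expand conjN cB ba -/a; ring.
by have := ge0_eq (ip_ge0 H _ z) E; rewrite pmulr_rge0 // subr_ge0.
Qed.

Lemma keyK n x (y : 'I_n -> X) z (c : 'I_n -> K) :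
  `|\sum_(i < n) c i * ip x (y i) z| ^+ 2 <=
  `|ip x x z| * (\sum_(i < n) `|c i| ^+ 2 * `|ip (y i) (y i) z| +
     \sum_(i < n) \sum_(j < n | i != j) `|c i| * `|c j| * `|ip (y i) (y j) z|).
Proof.
pose u := \sum_(i < n) conj (c i) *: y i.
have e1 w : ip w u z = \sum_(j < n) c j * ip w (y j) z.
  by rewrite ipsumr; apply: eq_bigr => j _; rewrite ipZr conjK.
rewrite -e1; apply: le_trans (CS x u z) _.
have hA := ip_ge0 H x z; have hU := ip_ge0 H u z.
rewrite (ger0_norm hA); apply: ler_wpM2l => //.
rewrite -(ger0_norm hU) {1}/u ipsuml.
apply: le_trans (ler_norm_sum _ _ _) _.
rewrite -big_split /=; apply: ler_sum => i _.
rewrite (ip_scal H) e1 normrM normJ.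
apply: le_trans (ler_wpM2l (normr_ge0 _) (ler_norm_sum _ _ _)) _.
rewrite (bigD1 i) //= mulrDr; apply: lerD.
  by rewrite normrM expr2 mulrA.
rewrite mulr_sumr le_eqVlt; apply/orP; left; apply/eqP.
rewrite (eq_bigl (fun j => i != j)); last by move=> j; rewrite eq_sym.
by apply: eq_bigr => j _; rewrite normrM mulrA.
Qed.

End TwoInner.

Lemma final (R : realType) (K : numDomainType) (conj : K -> K)
  (conjD : forall a b, conj (a + b) = conj a + conj b)
  (conjM : forall a b, conj (a * b) = conj a * conj b)
  (conjK : forall a, conj (conj a) = a) (conj1 : conj 1 = 1)
  (normJ : forall a, `|conj a| = `|a|) (mulJ : forall a, a * conj a = `|a| ^+ 2)
  (emb : {rmorphism R -> K}) (absK : K -> R)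
  (hemb : forall w, `|w| = emb (absK w))
  (hle : forall r s, emb r <= emb s -> r <= s)
  (X : lmodType K) (ip : X -> X -> X -> K) (H : is_2inner conj ip)
  (n : nat) (x : X) (y : 'I_n -> X) (z : X) (c : 'I_n -> K) :
  (0 < n)%N -> cor32_bounds absK ip x y z c.
Proof.
move=> n0.
have absK0 w : 0 <= absK w by apply: hle; rewrite rmorph0 -hemb.
have key : absK (\sum_(i < n) c i * ip x (y i) z) ^+ 2 <=
  absK (ip x x z) * (\sum_(i < n) absK (c i) ^+ 2 * absK (ip (y i) (y i) z) +
     \sum_(i < n) \sum_(j < n | i != j)
        absK (c i) * absK (c j) * absK (ip (y i) (y j) z)).
  apply: hle; rewrite rmorphXn rmorphM rmorphD -!hemb.
  have E1 : emb (\sum_(i < n) absK (c i) ^+ 2 * absK (ip (y i) (y i) z)) =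
     \sum_(i < n) `|c i| ^+ 2 * `|ip (y i) (y i) z|.
    by rewrite rmorph_sum; apply: eq_bigr => i _; rewrite rmorphM rmorphXn -!hemb.
  have E2 : emb (\sum_(i < n) \sum_(j < n | i != j)
        absK (c i) * absK (c j) * absK (ip (y i) (y j) z)) =
     \sum_(i < n) \sum_(j < n | i != j) `|c i| * `|c j| * `|ip (y i) (y j) z|.
    rewrite rmorph_sum; apply: eq_bigr => i _.
    by rewrite rmorph_sum; apply: eq_bigr => j _; rewrite !rmorphM -!hemb.
  rewrite E1 E2; exact: keyK.
have E3 : \sum_(i < n) absK (c i) ^+ 2 * absK (ip (y i) (y i) z) =
          \sum_(i < n) absK (c i) ^+ 2 * Num.sqrt (absK (ip (y i) (y i) z)) ^+ 2.
  by apply: eq_bigr => i _; rewrite sqr_sqrtr.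
rewrite E3 -(sqr_sqrtr (absK0 (ip x x z))) in key.
have nx0 : 0 <= Num.sqrt (absK (ip x x z)) ^+ 2 by exact: sqr_ge0.
have C0 i : 0 <= absK (c i) by [].
have m0 i : 0 <= Num.sqrt (absK (ip (y i) (y i) z)) by exact: sqrtr_ge0.
have a0 i j : 0 <= absK (ip (y i) (y j) z) by [].
rewrite /cor32_bounds; cbv beta zeta.
split.
- rewrite -mulrA; apply: le_trans key _; apply: ler_wpM2l => //.
  exact: bound_a.
- rewrite -mulrA; apply: le_trans key _; apply: ler_wpM2l => //.
  exact: bound_b.
- move=> p q p1 pq.
  rewrite -mulrA; apply: le_trans key _; apply: ler_wpM2l => //.
  exact: bound_c.
- rewrite -mulrA; apply: le_trans key _; apply: ler_wpM2l => //.
  exact: bound_d.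
Qed.

Theorem corollary3p2 :
  (forall (R : realType) (X : lmodType R) (ip : X -> X -> X -> R),
     is_2inner (fun a : R => a) ip ->
     forall (n : nat) (x : X) (y : 'I_n -> X) (z : X) (c : 'I_n -> R),
       (0 < n)%N -> cor32_bounds (fun a : R => `|a|) ip x y z c) /\
  (forall (R : realType) (X : lmodType R[i]) (ip : X -> X -> X -> R[i]),
     is_2inner (@conjc R) ip ->
     forall (n : nat) (x : X) (y : 'I_n -> X) (z : X) (c : 'I_n -> R[i]),
       (0 < n)%N -> cor32_bounds (@ComplexField.Normc.normc R) ip x y z c).
Proof.
split.
- move=> R X ip H n x y z c n0.
  apply: (@final R R (fun a => a) _ _ _ _ _ _ idfun) => //.
  by move=> a; rewrite real_normK ?num_real // expr2.
- move=> R X ip H n x y z c n0.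
  apply: (@final R R[i] (@conjc R) _ _ _ _ _ _ (real_complex R)) => //.
  + by move=> a b; rewrite rmorphD.
  + by move=> a b; rewrite rmorphM.
  + exact: conjcK.
  + exact: conjc1.
  + by case=> r s; rewrite !normc_def /= sqrrN.
  + case=> r s; rewrite !normc_def /= -rmorphXn sqr_sqrtr ?addr_ge0 ?sqr_ge0 //; simpc. apply/eqP; rewrite eq_complex /=; apply/andP; split; apply/eqP; ring.
  + by move=> r s; rewrite lecR.
Qed.
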